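(* Let $(X,d)$ be a compact metric space without isolated points which has the property*. If $f\in\mathcal{H}(X)$ is topologically stable, then $f$ has the shadowing property and the strict periodic shadowing property; in particular $CR(f)=\overline{Per(f)}$.
   Context: $\mathcal{H}(X)$ is the set of homeomorphisms of $X$; $d_{C^0}(f,g)=\sup_{x}d(f(x),g(x))$ for continuous maps, and $D(f,g)=\max\{d_{C^0}(f,g),d_{C^0}(f^{-1},g^{-1})\}$ for homeomorphisms. $f\in\mathcal{H}(X)$ is topologically stable if for every $\epsilon>0$ there is $\delta>0$ such that for every $g\in\mathcal{H}(X)$ with $D(f,g)<\delta$ there is a continuous $h:X\to X$ with $d_{C^0}(h,\mathrm{id}_X)<\epsilon$ and $h\circ g=f\circ h$. A finite sequence $(x_i)_{i=0}^k$ ($k\ge1$) is a $\delta$-chain if $d(f(x_i),x_{i+1})\le\delta$ for $0\le i\le k-1$, and a $\delta$-cycle if moreover $x_0=x_k$. A sequence $(x_i)_{i\ge0}$ is a $\delta$-pseudo orbit if $d(f(x_i),x_{i+1})\le\delta$ for all $i\ge0$; it is $\epsilon$-shadowed by $x$ if $d(x_i,f^i(x))\le\epsilon$ for all $i\ge0$. $f$ has the shadowing property if for every $\epsilon>0$ there is $\delta>0$ such that every $\delta$-pseudo orbit is $\epsilon$-shadowed by some point. $f$ has the strict periodic shadowing property if for every $\epsilon>0$ there is $\delta>0$ such that for every $\delta$-cycle $(x_i)_{i=0}^m$ ($m\ge1$) there is $p\in X$ with $f^m(p)=p$ and $d(x_i,f^i(p))\le\epsilon$ for $0\le i\le m$.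 $Per(f)$ is the set of periodic points; $CR(f)$ is the set of chain recurrent points, i.e. $x$ such that for every $\delta>0$ there is a $\delta$-cycle $(x_i)_{i=0}^k$ with $x_0=x_k=x$. Property*: for every $\epsilon>0$ there is $\delta>0$ such that for every $n\ge1$ and all proper $n$-tuples $\zeta=(x_1,\dots,x_n),\eta=(y_1,\dots,y_n)\in X^n$ (proper meaning pairwise distinct entries) with $\max_i d(x_i,y_i)<\delta$, there is $\phi\in\mathcal{H}(X)$ with $D(\phi,\mathrm{id}_X)<\epsilon$ and $\phi(x_i)=y_i$ for all $i$. *)

(* Defs.v *)
From Stdlib Require Import Reals List.
Open Scope R_scope.

Record MetricSpace := {
  carrier :> Type;
  dist : carrier -> carrier -> R;
  dist_nonneg : forall x y, 0 <= dist x y;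
  dist_eq0 : forall x y, dist x y = 0 <-> x = y;
  dist_sym : forall x y, dist x y = dist y x;
  dist_tri : forall x y z, dist x z <= dist x y + dist y z
}.

Section Metric.
Variable X : MetricSpace.

Definition is_open (U : X -> Prop) : Prop :=
  forall x, U x -> exists r, 0 < r /\ forall y, dist X x y < r -> U y.

Definition compact_space : Prop :=
  forall (I : Type) (U : I -> X -> Prop),
    (forall i, is_open (U i)) ->
    (forall x, exists i, U i x) ->
    exists l : list I, forall x, exists i, In i l /\ U i x.

Definition no_isolated_points : Prop :=
  forall (x : X) (e : R), 0 < e -> exists y, y <> x /\ dist X x y < e.

Definition continuous (f : X -> X) : Prop :=
  forall x e, 0 < e -> exists d, 0 < d /\
    forall y, dist X x y < d -> dist X (f x) (f y) < e.

Definition is_homeo (f finv : X -> X) : Prop :=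
  continuous f /\ continuous finv /\
  (forall x, f (finv x) = x) /\ (forall x, finv (f x) = x).

(** d_{C^0}(f,g) < e, i.e. sup_x d(f x, g x) < e. *)
Definition dC0_lt (f g : X -> X) (e : R) : Prop :=
  exists eta, eta < e /\ forall x, dist X (f x) (g x) <= eta.

Definition D_lt (f finv g ginv : X -> X) (e : R) : Prop :=
  exists eta, eta < e /\
    forall x, dist X (f x) (g x) <= eta /\ dist X (finv x) (ginv x) <= eta.

Definition topologically_stable (f finv : X -> X) : Prop :=
  forall e, 0 < e -> exists d, 0 < d /\
    forall g ginv, is_homeo g ginv -> D_lt f finv g ginv d ->
      exists h : X -> X, continuous h /\ dC0_lt h (fun x => x) e /\
        forall x, h (g x) = f (h x).

Definition proper_tuple (n : nat) (x : nat -> X) : Prop :=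
  forall i j, (i < n)%nat -> (j < n)%nat -> i <> j -> x i <> x j.

Definition property_star : Prop :=
  forall e, 0 < e -> exists d, 0 < d /\
    forall (n : nat) (xs ys : nat -> X), (1 <= n)%nat ->
      proper_tuple n xs -> proper_tuple n ys ->
      (forall i, (i < n)%nat -> dist X (xs i) (ys i) < d) ->
      exists phi phiinv, is_homeo phi phiinv /\
        D_lt phi phiinv (fun x => x) (fun x => x) e /\
        forall i, (i < n)%nat -> phi (xs i) = ys i.

Definition iter (f : X -> X) (n : nat) (x : X) : X := Nat.iter n f x.

Definition pseudo_orbit (f : X -> X) (d : R) (xs : nat -> X) : Prop :=
  forall i, dist X (f (xs i)) (xs (S i)) <= d.

Definition shadowing (f : X -> X) : Prop :=
  forall e, 0 < e -> exists d, 0 < d /\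
    forall xs, pseudo_orbit f d xs ->
      exists x, forall i, dist X (xs i) (iter f i x) <= e.

Definition chain (f : X -> X) (d : R) (k : nat) (xs : nat -> X) : Prop :=
  (1 <= k)%nat /\ forall i, (i < k)%nat -> dist X (f (xs i)) (xs (S i)) <= d.

Definition cycle (f : X -> X) (d : R) (k : nat) (xs : nat -> X) : Prop :=
  chain f d k xs /\ xs O = xs k.

Definition strict_periodic_shadowing (f : X -> X) : Prop :=
  forall e, 0 < e -> exists d, 0 < d /\
    forall m xs, cycle f d m xs ->
      exists p, iter f m p = p /\
        forall i, (i <= m)%nat -> dist X (xs i) (iter f i p) <= e.

Definition periodic (f : X -> X) (p : X) : Prop :=
  exists n, (1 <= n)%nat /\ iter f n p = p.

Definition chain_recurrent (f : X -> X) (x : X) : Prop :=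
  forall d, 0 < d -> exists k xs, cycle f d k xs /\ xs O = x /\ xs k = x.

Definition closure (A : X -> Prop) (x : X) : Prop :=
  forall e, 0 < e -> exists y, A y /\ dist X x y < e.

End Metric.

(* Main.v *)
Require Import Defs.
From Stdlib Require Import Reals.
Open Scope R_scope.
From Stdlib Require Import Lra Lia Classical List ClassicalEpsilon.
Import Defs.

Lemma dpos (X:MetricSpace) x y : x <> y -> 0 < dist X x y.
Proof. intros H. destruct (dist_nonneg X x y) as [h|h]; auto.
  exfalso; apply H, (dist_eq0 X); auto. Qed.

Lemma d0 (X:MetricSpace) x : dist X x x = 0.
Proof. apply (dist_eq0 X); reflexivity. Qed.

Lemma fold_min (A:Type) (g:A->R) (l:list A) : (forall a, 0 < g a) ->
  0 < fold_right (fun a acc => Rmin (g a) acc) 1 l /\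
  forall a, In a l -> fold_right (fun a acc => Rmin (g a) acc) 1 l <= g a.
Proof.
  intros Hg; induction l as [|b l [IH1 IH2]]; simpl.
  - split; [lra| intros a []].
  - split. apply Rmin_glb_lt; auto.
    intros a [<-|Ha]. apply Rmin_l. eapply Rle_trans. apply Rmin_r. auto.
Qed.

Lemma fold_max (A:Type) (g:A->nat) (l:list A) a : In a l ->
  (g a <= fold_right (fun a acc => Nat.max (g a) acc) 0%nat l)%nat.
Proof.
  induction l as [|b l IH]; simpl. intros []. intros [<-|Ha]. lia. specialize (IH Ha). lia.
Qed.

Lemma cont_comp (X:MetricSpace) F G : continuous X F -> continuous X G ->
  continuous X (fun x => F (G x)).
Proof.
  intros HF HG x e He. destruct (HF (G x) e He) as [d1 [Hd1 H1]].
  destruct (HG x d1 Hd1) as [d2 [Hd2 H2]]. exists d2; split; auto.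
Qed.

Lemma iter_S (X:MetricSpace) f n x : iter X f (S n) x = f (iter X f n x).
Proof. reflexivity. Qed.

Lemma iter_cont (X:MetricSpace) f n : continuous X f -> continuous X (iter X f n).
Proof.
  intros Hf. induction n.
  - intros x e He. exists e; split; auto.
  - apply (cont_comp X f (iter X f n)); auto.
Qed.

Lemma unif_cont (X:MetricSpace) F : compact_space X -> continuous X F ->
  forall e, 0 < e -> exists d, 0 < d /\ forall y z, dist X y z < d -> dist X (F y) (F z) < e.
Proof.
  intros Hc HF e He.
  set (I := {x : X & {r : R | 0 < r /\ forall y, dist X x y < r -> dist X (F x) (F y) < e/2}}).
  set (rad := fun i : I => proj1_sig (projT2 i)).
  set (U := fun (i:I) y => dist X (projT1 i) y < rad i / 2).
  destruct (Hc I U) as [l Hl].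
  - intros i x Hx. exists (rad i / 2 - dist X (projT1 i) x). split. unfold U in Hx; lra.
    intros y Hy. unfold U. pose proof (dist_tri X (projT1 i) x y). lra.
  - intros x. destruct (HF x (e/2) ltac:(lra)) as [d [Hd H]].
    exists (existT _ x (exist _ d (conj Hd H))). unfold U, rad; simpl. rewrite d0. lra.
  - assert (Hrad : forall i, 0 < rad i / 2).
    { intros i. unfold rad. pose proof (proj1 (proj2_sig (projT2 i))). lra. }
    destruct (fold_min I (fun i => rad i / 2) l Hrad) as [Hm1 Hm2].
    exists (fold_right (fun a acc => Rmin (rad a / 2) acc) 1 l). split; auto.
    intros y z Hyz. destruct (Hl y) as [i [Hi Hu]]. specialize (Hm2 i Hi).
    unfold U in Hu. destruct i as [x [r [Hr Hx]]]. unfold rad in *; simpl in *.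
    pose proof (dist_tri X x y z).
    assert (A1 := Hx y ltac:(lra)). assert (A2 := Hx z ltac:(lra)).
    pose proof (dist_tri X (F y) (F x) (F z)). rewrite (dist_sym X (F y) (F x)) in H0. lra.
Qed.

Lemma cluster (X:MetricSpace) : compact_space X -> forall p : nat -> X,
  exists q, forall r, 0 < r -> forall N, exists n, (N <= n)%nat /\ dist X q (p n) < r.
Proof.
  intros Hc p. apply NNPP; intro Hn.
  set (I := {q : X & {r : R & {N : nat | 0 < r /\ forall n, (N <= n)%nat -> r <= dist X q (p n)}}}).
  set (U := fun (i:I) y => dist X (projT1 i) y < projT1 (projT2 i)).
  destruct (Hc I U) as [l Hl].
  - intros i x Hx. exists (projT1 (projT2 i) - dist X (projT1 i) x). split. unfold U in Hx; lra.
    intros y Hy. unfold U. pose proof (dist_tri X (projT1 i) x y). lra.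
  - intros x.
    destruct (classic (exists r N, 0 < r /\ forall n, (N <= n)%nat -> r <= dist X x (p n)))
      as [[r [N [Hr HN]]] | Hno].
    + exists (existT _ x (existT _ r (exist _ N (conj Hr HN)))). unfold U; simpl. rewrite d0. lra.
    + exfalso; apply Hn; exists x; intros r Hr N. apply NNPP; intro Hnn; apply Hno.
      exists r, N; split; auto. intros n Hn'. apply Rnot_lt_le; intro Hlt; apply Hnn; exists n; auto.
  - set (Nmax := fold_right (fun a acc => Nat.max (proj1_sig (projT2 (projT2 a))) acc) 0%nat l).
    destruct (Hl (p Nmax)) as [i [Hi Hu]].
    pose proof (fold_max I (fun a => proj1_sig (projT2 (projT2 a))) l i Hi) as HM.
    unfold U in Hu. pose proof (proj2 (proj2_sig (projT2 (projT2 i))) Nmax HM). lra.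
Qed.

Lemma avoid (X:MetricSpace) : no_isolated_points X -> forall n (ys: nat -> X) x r, 0 < r ->
  exists y, y <> x /\ dist X x y < r /\ forall i, (i < n)%nat -> y <> ys i.
Proof.
  intros Hni n ys. induction n as [|n IH]; intros x r Hr.
  - destruct (Hni x r Hr) as [y [H1 H2]]. exists y; repeat split; auto. intros; lia.
  - destruct (classic (ys n = x)) as [E|E].
    + destruct (IH x r Hr) as [y [H1 [H2 H3]]]. exists y; repeat split; auto.
      intros i Hi. destruct (Nat.eq_dec i n) as [->|]. rewrite E; auto. apply H3; lia.
    + assert (Hp := dpos X _ _ (not_eq_sym E)).
      destruct (IH x (Rmin r (dist X x (ys n))) (Rmin_glb_lt _ _ _ Hr Hp)) as [y [H1 [H2 H3]]].
      pose proof (Rmin_l r (dist X x (ys n))). pose proof (Rmin_r r (dist X x (ys n))).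
      exists y; repeat split; auto. lra.
      intros i Hi. destruct (Nat.eq_dec i n) as [->|]. intro Ey; rewrite Ey in H2; lra. apply H3; lia.
Qed.

Lemma choose_pts (X:MetricSpace) f : no_isolated_points X -> continuous X f ->
  forall eta, 0 < eta -> forall (xs : nat -> X) k, exists ys,
   (forall i, (i <= k)%nat -> dist X (xs i) (ys i) < eta /\ dist X (f (xs i)) (f (ys i)) < eta) /\
   (forall i j, (i <= k)%nat -> (j <= k)%nat -> i <> j -> ys i <> ys j).
Proof.
  intros Hni Hf eta Heta xs.
  assert (one : forall x n (ys : nat -> X), exists y, dist X x y < eta /\ dist X (f x) (f y) < eta
             /\ forall i, (i < n)%nat -> y <> ys i).
  { intros x n ys. destruct (Hf x eta Heta) as [d [Hd H]].
    destruct (avoid X Hni n ys x (Rmin eta d) (Rmin_glb_lt _ _ _ Heta Hd)) as [y [_ [H2 H3]]].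
    pose proof (Rmin_l eta d). pose proof (Rmin_r eta d).
    exists y; repeat split; auto; try lra. apply H; lra. }
  induction k as [|k [ys [IH1 IH2]]].
  - destruct (one (xs O) O xs) as [y [H1 [H2 _]]]. exists (fun _ => y). split.
    + intros i Hi. replace i with O by lia. auto.
    + intros i j Hi Hj Hij. lia.
  - destruct (one (xs (S k)) (S k) ys) as [y [H1 [H2 H3]]].
    exists (fun i => if Nat.eqb i (S k) then y else ys i). split.
    + intros i Hi. destruct (Nat.eqb_spec i (S k)) as [->|Hne]. auto. apply IH1; lia.
    + intros i j Hi Hj Hij.
      destruct (Nat.eqb_spec i (S k)) as [->|Hne]; destruct (Nat.eqb_spec j (S k)) as [->|Hne'].
      * lia.
      * apply H3; lia.
      * apply not_eq_sym, H3; lia.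
      * apply IH2; lia.
Qed.

Lemma core (X:MetricSpace) f finv : compact_space X -> property_star X ->
  is_homeo X f finv -> topologically_stable X f finv ->
  forall e, 0 < e -> exists dl eta, 0 < dl /\ 0 < eta /\
   forall k (xs ys : nat -> X), (1 <= k)%nat ->
    (forall i, (i < k)%nat -> dist X (f (xs i)) (xs (S i)) <= dl) ->
    (forall i, (i <= k)%nat -> dist X (xs i) (ys i) < eta) ->
    (forall i, (i < k)%nat -> dist X (f (xs i)) (f (ys i)) < eta) ->
    proper_tuple X k ys -> proper_tuple X k (fun i => ys (S i)) ->
    exists p, (forall i, (i <= k)%nat -> dist X (xs i) (iter X f i p) <= e) /\
              (ys k = ys O -> iter X f k p = p).
Proof.
  intros Hc Hstar [Hfc [Hfic [Hffi Hfif]]] Hts e He.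
  destruct (Hts (e/2) ltac:(lra)) as [dts [Hdts Hts']].
  destruct (unif_cont X finv Hc Hfic (dts/2) ltac:(lra)) as [rho [Hrho Hunif]].
  assert (Hes : 0 < Rmin (dts/2) rho) by (apply Rmin_glb_lt; lra).
  pose proof (Rmin_l (dts/2) rho). pose proof (Rmin_r (dts/2) rho).
  destruct (Hstar _ Hes) as [ds [Hds Hstar']].
  exists (ds/4), (Rmin (ds/4) (e/2)).
  pose proof (Rmin_l (ds/4) (e/2)). pose proof (Rmin_r (ds/4) (e/2)).
  split; [lra|]. split; [apply Rmin_glb_lt; lra|].
  intros k xs ys Hk Hch Hxy Hfxy Hp1 Hp2.
  assert (Hp0 : proper_tuple X k (fun i => f (ys i))).
  { intros i j Hi Hj Hij E. apply (Hp1 i j Hi Hj Hij). rewrite <- (Hfif (ys i)), E. auto. }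
  destruct (Hstar' k (fun i => f (ys i)) (fun i => ys (S i)) Hk Hp0 Hp2) as
      [phi [phiinv [[Hpc [Hpic [Hpp1 Hpp2]]] [[et [Het HD]] Hmap]]]].
  { intros i Hi. pose proof (dist_tri X (f (ys i)) (f (xs i)) (ys (S i))).
    pose proof (dist_tri X (f (xs i)) (xs (S i)) (ys (S i))).
    rewrite (dist_sym X (f (ys i)) (f (xs i))) in H3.
    specialize (Hch i Hi). specialize (Hxy (S i) ltac:(lia)). specialize (Hfxy i Hi). lra. }
  set (g := fun x => phi (f x)). set (ginv := fun x => finv (phiinv x)).
  assert (Hg : is_homeo X g ginv).
  { unfold g, ginv. split. apply cont_comp; auto. split. apply cont_comp; auto. split.
    - intros x. unfold g, ginv. rewrite Hffi. auto.
    - intros x. unfold g, ginv. rewrite Hpp2. auto. }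
  assert (HDg : D_lt X f finv g ginv dts).
  { exists (dts/2). split. lra. intros x. destruct (HD (f x)) as [A1 _]. destruct (HD x) as [_ A2].
    split.
    - unfold g. rewrite dist_sym. lra.
    - unfold ginv. left. apply Hunif. rewrite dist_sym. lra. }
  destruct (Hts' g ginv Hg HDg) as [h [Hhc [[eh [Heh Hhb]] Hconj]]].
  exists (h (ys O)).
  assert (Horb : forall i, (i <= k)%nat -> h (ys i) = iter X f i (h (ys O))).
  { induction i as [|i IH]; intros Hi. reflexivity.
    rewrite iter_S, <- IH by lia. rewrite <- (Hmap i) by lia. apply (Hconj (ys i)). }
  split.
  - intros i Hi. rewrite <- Horb by auto.
    pose proof (dist_tri X (xs i) (ys i) (h (ys i))). specialize (Hhb (ys i)).
    rewrite (dist_sym X (h (ys i))) in Hhb. specialize (Hxy i Hi). lra.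
  - intros E. rewrite <- Horb by lia. rewrite E. reflexivity.
Qed.

Lemma le_eps a b : (forall g, 0 < g -> a <= b + g) -> a <= b.
Proof.
  intros H. apply Rnot_lt_le; intro Hlt. specialize (H ((a - b)/2) ltac:(lra)). lra.
Qed.

Lemma fin_shadow (X:MetricSpace) f finv : compact_space X -> no_isolated_points X -> property_star X ->
  is_homeo X f finv -> topologically_stable X f finv ->
  forall e, 0 < e -> exists dl, 0 < dl /\ forall k (xs : nat -> X),
    (forall i, (i < k)%nat -> dist X (f (xs i)) (xs (S i)) <= dl) ->
    exists p, forall i, (i <= k)%nat -> dist X (xs i) (iter X f i p) <= e.
Proof.
  intros Hc Hni Hs Hh Hts e He.
  destruct (core X f finv Hc Hs Hh Hts e He) as [dl [eta [Hdl [Heta Hcore]]]].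
  exists dl; split; auto. intros k xs Hch.
  destruct k as [|k].
  - exists (xs O). intros i Hi. replace i with O by lia. simpl. rewrite d0. lra.
  - destruct Hh as [Hfc Hrest].
    destruct (choose_pts X f Hni Hfc eta Heta xs (S k)) as [ys [H1 H2]].
    destruct (Hcore (S k) xs ys ltac:(lia) Hch) as [p [Hp _]].
    + intros i Hi; apply H1; auto.
    + intros i Hi; apply H1; lia.
    + intros i j Hi Hj Hij; apply H2; lia.
    + intros i j Hi Hj Hij; apply H2; lia.
    + exists p; auto.
Qed.

Lemma sps (X:MetricSpace) f finv : compact_space X -> no_isolated_points X -> property_star X ->
  is_homeo X f finv -> topologically_stable X f finv -> strict_periodic_shadowing X f.
Proof.
  intros Hc Hni Hs Hh Hts e He.
  destruct (core X f finv Hc Hs Hh Hts e He) as [dl [eta [Hdl [Heta Hcore]]]].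
  exists dl; split; auto. intros m xs [[Hm Hch] Hcyc].
  destruct Hh as [Hfc Hrest].
  destruct (choose_pts X f Hni Hfc eta Heta xs (m - 1)) as [ys [H1 H2]].
  set (ys' := fun i => if Nat.eqb i m then ys O else ys i).
  destruct (Hcore m xs ys' Hm Hch) as [p [Hp Hper]].
  - intros i Hi. unfold ys'. destruct (Nat.eqb_spec i m) as [->|Hne].
    rewrite <- Hcyc. apply H1; lia. apply H1; lia.
  - intros i Hi. unfold ys'. destruct (Nat.eqb_spec i m) as [->|Hne]. lia. apply H1; lia.
  - intros i j Hi Hj Hij. unfold ys'.
    destruct (Nat.eqb_spec i m); destruct (Nat.eqb_spec j m); try lia. apply H2; lia.
  - intros i j Hi Hj Hij. unfold ys'.
    destruct (Nat.eqb_spec (S i) m); destruct (Nat.eqb_spec (S j) m); try lia;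
      apply H2; lia.
  - exists p. split.
    + apply Hper. unfold ys'. rewrite Nat.eqb_refl.
      destruct (Nat.eqb_spec O m); [lia|reflexivity].
    + auto.
Qed.

Lemma shad (X:MetricSpace) f finv : compact_space X -> no_isolated_points X -> property_star X ->
  is_homeo X f finv -> topologically_stable X f finv -> shadowing X f.
Proof.
  intros Hc Hni Hs Hh Hts e He.
  destruct (fin_shadow X f finv Hc Hni Hs Hh Hts e He) as [dl [Hdl Hfin]].
  exists dl; split; auto. intros xs Hpo.
  assert (Hn : forall n, exists p, forall i, (i <= n)%nat -> dist X (xs i) (iter X f i p) <= e).
  { intros n. apply Hfin. intros i _. apply Hpo. }
  set (pn := fun n => proj1_sig (constructive_indefinite_description _ (Hn n))).
  assert (Hpn : forall n i, (i <= n)%nat -> dist X (xs i) (iter X f i (pn n)) <= e).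
  { intros n. unfold pn. destruct (constructive_indefinite_description _ (Hn n)); simpl; auto. }
  destruct (cluster X Hc pn) as [q Hq].
  exists q. intros i. apply le_eps. intros g Hg.
  destruct Hh as [Hfc _].
  destruct (iter_cont X f i Hfc q g Hg) as [r [Hr Hcont]].
  destruct (Hq r Hr i) as [n [Hni' Hdn]].
  specialize (Hcont _ Hdn). specialize (Hpn n i Hni').
  pose proof (dist_tri X (xs i) (iter X f i (pn n)) (iter X f i q)).
  rewrite (dist_sym X (iter X f i (pn n))) in H. lra.
Qed.

Lemma cr_char (X:MetricSpace) f : continuous X f -> strict_periodic_shadowing X f ->
  forall x, chain_recurrent X f x <-> closure X (periodic X f) x.
Proof.
  intros Hfc Hsps x. split.
  - intros Hcr e He. destruct (Hsps (e/2) ltac:(lra)) as [d [Hd Hs]].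
    destruct (Hcr d Hd) as [k [xs [Hcyc [H0 Hk]]]].
    destruct (Hs k xs Hcyc) as [p [Hp Hb]].
    exists p. split. exists k. split; auto. destruct Hcyc as [[Hk1 _] _]; auto.
    specialize (Hb O ltac:(lia)). rewrite H0 in Hb. simpl in Hb. lra.
  - intros Hcl d Hd. destruct (Hfc x (d/2) ltac:(lra)) as [r [Hr Hcont]].
    assert (Hd2 : 0 < d/2) by lra.
    destruct (Hcl (Rmin r (d/2)) (Rmin_glb_lt _ _ _ Hr Hd2)) as [y [[n [Hn Hy]] Hxy]].
    pose proof (Rmin_l r (d/2)). pose proof (Rmin_r r (d/2)).
    specialize (Hcont y ltac:(lra)).
    set (xs := fun i => if orb (Nat.eqb i O) (Nat.eqb i n) then x else iter X f i y).
    assert (HxyF : dist X (iter X f n y) x < d/2) by (rewrite Hy, dist_sym; lra).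
    exists n, xs. split; [split; [split; auto|] | split].
    + assert (X0 : xs O = x) by reflexivity.
      assert (Xn : xs n = x) by (unfold xs; rewrite Nat.eqb_refl, Bool.orb_true_r; reflexivity).
      assert (Xj : forall j, j <> O -> j <> n -> xs j = iter X f j y).
      { intros j Hj1 Hj2. unfold xs. apply Nat.eqb_neq in Hj1. apply Nat.eqb_neq in Hj2.
        rewrite Hj1, Hj2. reflexivity. }
      intros i Hi.
      destruct (Nat.eqb_spec i O) as [E0|Hi0]; destruct (Nat.eqb_spec (S i) n) as [Esn|Esn].
      * subst i. rewrite X0, Esn, Xn. rewrite <- Esn in HxyF. simpl in HxyF.
        pose proof (dist_tri X (f x) (f y) x). lra.
      * subst i. rewrite X0, Xj by lia. simpl. lra.
      * rewrite Xj by lia. rewrite Esn, Xn. rewrite <- Esn in HxyF. rewrite iter_S in HxyF. lra.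
      * rewrite Xj by lia. rewrite Xj by lia. rewrite iter_S, d0. lra.
    + unfold xs. rewrite Nat.eqb_refl. destruct (Nat.eqb_spec n O); simpl; auto.
      rewrite Nat.eqb_refl. destruct (Nat.eqb O O); reflexivity.
    + unfold xs. simpl. reflexivity.
    + unfold xs. rewrite Nat.eqb_refl, Bool.orb_true_r. reflexivity.
Qed.

Theorem theorem1p1 (X : MetricSpace) (f finv : X -> X) :
  compact_space X -> no_isolated_points X -> property_star X ->
  is_homeo X f finv -> topologically_stable X f finv ->
  shadowing X f /\ strict_periodic_shadowing X f /\
  (forall x, chain_recurrent X f x <-> closure X (periodic X f) x).
Proof.
  intros Hc Hni Hs Hh Hts.
  split. apply (shad X f finv); auto.
  split. apply (sps X f finv); auto.
  apply cr_char. destruct Hh; auto. apply (sps X f finv); auto.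
Qed.
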